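(* Let $\Sigma$ be a theory. For each $M \subseteq \mathcal{T}_Y$, $[M]_\Sigma = \bigcup\{[N]_\Sigma \mid N \text{ is a finite subset of } M\}$.
   Context: $Y$ is a non-empty finite set of attributes and $\mathcal{T}_Y = \{y^i \mid y \in Y, i \in \mathbb{Z}\}$. For $M \subseteq \mathcal{T}_Y$ and $j \in \mathbb{Z}$, $M + j = \{y^{i+j} \mid y^i \in M\}$. A formula is $A \Rightarrow B$ with $A,B$ finite subsets of $\mathcal{T}_Y$; $M \models A \Rightarrow B$ means that for every $i \in \mathbb{Z}$, $A+i \subseteq M$ implies $B+i \subseteq M$. A theory is a set of formulas; $\mathrm{Mod}(\Sigma)$ is the set of all $M \subseteq \mathcal{T}_Y$ in which every formula of $\Sigma$ is true. The semantic closure is $[M]_\Sigma = \bigcap\{N \in \mathrm{Mod}(\Sigma) \mid M \subseteq N\}$. *)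

(* Defs.v *)
From Stdlib Require Import ZArith List FinFun.
Import ListNotations.
Open Scope Z_scope.

(* Temporal attributes y^i are represented as pairs (y, i) : Y * Z. *)
Definition tattr (Y : Type) : Type := (Y * Z)%type.

Definition tset (Y : Type) : Type := tattr Y -> Prop.

Definition subset {Y : Type} (M N : tset Y) : Prop := forall t, M t -> N t.

Definition shift {Y : Type} (M : tset Y) (j : Z) : tset Y :=
  fun t => exists t', M t' /\ t = (fst t', snd t' + j).

(* Finite subsets of T_Y are given by lists; [fin A] is the set they denote. *)
Definition fin {Y : Type} (A : list (tattr Y)) : tset Y := fun t => In t A.

Record formula (Y : Type) : Type := Formula { lhs : list (tattr Y); rhs : list (tattr Y) }.
Arguments Formula {Y} _ _.
Arguments lhs {Y} _.
Arguments rhs {Y} _.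

Definition models {Y : Type} (M : tset Y) (f : formula Y) : Prop :=
  forall i : Z, subset (shift (fin (lhs f)) i) M -> subset (shift (fin (rhs f)) i) M.

Definition theory (Y : Type) : Type := formula Y -> Prop.

Definition Mod {Y : Type} (S : theory Y) (M : tset Y) : Prop :=
  forall f, S f -> models M f.

Definition closure {Y : Type} (S : theory Y) (M : tset Y) : tset Y :=
  fun t => forall N, Mod S N -> subset M N -> N t.

(* Main.v *)
Require Import Defs.
From Stdlib Require Import ZArith List FinFun.

Lemma closure_mono {Y} (S : theory Y) (A B : tset Y) :
  subset A B -> subset (closure S A) (closure S B).
Proof. intros H t Ht N HN HB. apply Ht; auto. intros x Hx; apply HB, H, Hx. Qed.

Lemma closure_ext {Y} (S : theory Y) (A : tset Y) : subset A (closure S A).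
Proof. intros t Ht N HN HA. apply HA, Ht. Qed.

Lemma closure_mod {Y} (S : theory Y) (A : tset Y) : Mod S (closure S A).
Proof.
  intros f Hf i Hl t Ht N HN HA.
  apply (HN f Hf i); auto.
  intros x Hx. apply (Hl x Hx N HN HA).
Qed.

Lemma collect {Y} (S : theory Y) (M : tset Y) (L : list (tattr Y)) :
  (forall x, In x L -> exists N, subset (fin N) M /\ closure S (fin N) x) ->
  exists N, subset (fin N) M /\ forall x, In x L -> closure S (fin N) x.
Proof.
  induction L as [|a L IH]; intros H.
  - exists nil. split. intros t Ht; destruct Ht. intros x [].
  - destruct (H a (or_introl eq_refl)) as [N1 [H1 H1']].
    destruct IH as [N2 [H2 H2']]. { intros x Hx; apply H; right; exact Hx. }
    exists (N1 ++ N2). split.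
    + intros t Ht. unfold fin in Ht. apply in_app_or in Ht as [Ht|Ht]; [apply H1|apply H2]; exact Ht.
    + intros x [<-|Hx].
      * eapply closure_mono; [|exact H1']. intros t Ht; apply in_or_app; left; exact Ht.
      * eapply closure_mono; [|apply H2', Hx]. intros t Ht; apply in_or_app; right; exact Ht.
Qed.

Theorem theorem2 (Y : Type) (HYfin : Finite Y) (HYne : inhabited Y)
  (S : theory Y) (M : tset Y) :
  forall t : tattr Y,
    closure S M t <->
    exists N : list (tattr Y), subset (fin N) M /\ closure S (fin N) t.
Proof.
  intro t; split.
  - intro Ht. apply Ht.
    + intros f Hf i Hl.
      set (L := map (fun t' : tattr Y => (fst t', (snd t' + i)%Z)) (lhs f)).
      destruct (collect S M L) as [N [HN HN']].
      { intros x Hx. unfold L in Hx. apply in_map_iff in Hx as [t' [<- Ht']].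
        apply Hl. exists t'. split; [exact Ht'|reflexivity]. }
      intros x Hx. exists N. split; [exact HN|].
      apply (closure_mod S (fin N) f Hf i); [|exact Hx].
      intros y [t' [Ht' ->]]. apply HN'. unfold L. apply in_map_iff.
      exists t'. split; [reflexivity|exact Ht'].
    + intros x Hx. exists (x :: nil). split.
      * intros y [<-|[]]. exact Hx.
      * apply closure_ext. left; reflexivity.
  - intros [N [HN Ht]]. eapply closure_mono; [exact HN|exact Ht].
Qed.
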